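(* Let $(I_n)_{n\ge1}$ be pairwise disjoint intervals in $\mathcal{R}$ with $\lim_{n\to\infty}l(I_n)=0$, and let $A,B\subseteq\mathcal{R}$ be outer measurable with $A\subseteq\bigcup_{n=1}^\infty I_n$ and $B\subseteq\mathcal{R}\setminus\bigcup_{n=1}^\infty I_n$. Then $A\cup B$ is outer measurable and $M_u(A\cup B)=M_u(A)+M_u(B)$.
   Context: $\mathcal{R}$ denotes the Levi-Civita field: functions $x:\mathbb{Q}\to\mathbb{R}$ with left-finite support, with componentwise addition and formal power series multiplication, ordered by $x>0$ iff $x\ne0$ and $x[\min\operatorname{supp}x]>0$; it is a non-Archimedean ordered field extension of $\mathbb{R}$, Cauchy complete in the order topology, in which all limits and series are taken (a series $\sum a_n$ converges iff $a_n\to0$). An interval is a set $[a,b],[a,b),(a,b]$ or $(a,b)$ with $a<b$ in $\mathcal{R}$, of length $l=b-a$. A cover of $A\subseteq\mathcal{R}$ is a sequence of intervals $(S_n)_{n\ge1}$ with $A\subseteq\bigcup_n S_n$ and $\sum_n l(S_n)$ convergent in $\mathcal{R}$. $A$ is called outer measurable if the infimum $\inf\{\sum_n l(S_n): (S_n)\text{ a cover of }A\}$ exists in $\mathcal{R}$; this infimum is then called the outer measure $M_u(A)$. *)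

(* Defs.v *)
(* the Levi-Civita field over an arbitrary realType R
   (any realType is a model of the real numbers). *)
From HB Require Import structures.
From mathcomp Require Import all_boot all_order all_algebra.
From mathcomp Require Import boolp classical_sets functions cardinality reals.
Set Implicit Arguments. Unset Strict Implicit. Unset Printing Implicit Defensive.
Import Order.TTheory GRing.Theory Num.Theory.
Local Open Scope ring_scope.
Local Open Scope classical_set_scope.

Section LeviCivita.
Variable R : realType.

Definition LCf := rat -> R.

Definition LC : set LCf :=
  [set x | forall q : rat, finite_set [set p : rat | p < q /\ x p != 0]].

Definition LCzero : LCf := fun _ => 0.
Definition LCadd (x y : LCf) : LCf := fun q => x q + y q.
Definition LCopp (x : LCf) : LCf := fun q => - x q.
Definition LCsub (x y : LCf) : LCf := fun q => x q - y q.

(* x > 0 iff x <> 0 and x[min supp x] > 0 : q is the minimum of the support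
   and the coefficient there is positive *)
Definition LCpos (x : LCf) : Prop :=
  exists q : rat, 0 < x q /\ forall p : rat, p < q -> x p = 0.

Definition LClt (x y : LCf) : Prop := LCpos (LCsub y x).
Definition LCle (x y : LCf) : Prop := x = y \/ LClt x y.

Definition LCconv (s : nat -> LCf) (L : LCf) : Prop :=
  L \in LC /\
  forall lo hi : LCf, lo \in LC -> hi \in LC -> LClt lo L -> LClt L hi ->
    exists N : nat, forall n : nat, (N <= n)%N -> LClt lo (s n) /\ LClt (s n) hi.

Definition LCpsum (a : nat -> LCf) (n : nat) : LCf := fun q => \sum_(i < n) a i q.
Definition LCseries_conv (a : nat -> LCf) (L : LCf) : Prop := LCconv (LCpsum a) L.

(* intervals: endpoints a < b, and flags telling whether each end is closed *)
Record lc_interval := Itv { ilo : LCf; ihi : LCf; iloc : bool; ihic : bool }.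

Definition itv_valid (I : lc_interval) : Prop :=
  ilo I \in LC /\ ihi I \in LC /\ LClt (ilo I) (ihi I).

Definition itv_set (I : lc_interval) : set LCf :=
  [set x | x \in LC /\
    (if iloc I then LCle (ilo I) x else LClt (ilo I) x) /\
    (if ihic I then LCle x (ihi I) else LClt x (ihi I))].

Definition itv_len (I : lc_interval) : LCf := LCsub (ihi I) (ilo I).

Definition is_cover (A : set LCf) (S : nat -> lc_interval) (L : LCf) : Prop :=
  (forall n, itv_valid (S n)) /\
  A `<=` \bigcup_n itv_set (S n) /\
  LCseries_conv (fun n => itv_len (S n)) L.

Definition cover_sums (A : set LCf) : set LCf :=
  [set L | exists S, is_cover A S L].

Definition is_outer_measure (A : set LCf) (m : LCf) : Prop :=
  m \in LC /\
  (forall L, cover_sums A L -> LCle m L) /\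
  (forall m', m' \in LC -> (forall L, cover_sums A L -> LCle m' L) -> LCle m' m).

Definition outer_measurable (A : set LCf) : Prop :=
  exists m, is_outer_measure A m.

End LeviCivita.

(* Main.v *)
Require Import Defs.
From mathcomp Require Import all_boot all_order all_algebra.
From mathcomp Require Import boolp classical_sets functions cardinality reals.
From mathcomp Require Import ring lra.
Set Implicit Arguments. Unset Strict Implicit. Unset Printing Implicit Defensive.
Import Order.TTheory GRing.Theory Num.Theory.
Local Open Scope classical_set_scope.

Section Aux.
Local Open Scope ring_scope.
Local Open Scope classical_set_scope.
Variable R : realType.
Notation F := (LCf R).
Notation LC := (@LC R).

Lemma inLC (x : F) : x \in LC <-> LC x.
Proof. by rewrite inE. Qed.

Definition dlt (q : rat) : F := fun p => if p == q then 1 else 0.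

Lemma LC_sub_fin (x y : F) : LC y -> (forall p, x p != 0 -> y p != 0) -> LC x.
Proof.
move=> Hy H q; apply: sub_finite_set (Hy q) => p /= [pq xp]; split => //; exact: H.
Qed.

Lemma LC_add (x y : F) : LC x -> LC y -> LC (LCadd x y).
Proof.
move=> Hx Hy q; apply: (@sub_finite_set _ _ ([set p | p < q /\ x p != 0] `|` [set p | p < q /\ y p != 0])).
  move=> p /= [pq]; rewrite /LCadd => nz.
  have [x0|x0] := eqVneq (x p) 0; last by left.
  by right; split => //; apply: contraNneq nz => ->; rewrite x0 addr0.
by rewrite finite_setU; split.
Qed.

Lemma LC_opp (x : F) : LC x -> LC (LCopp x).
Proof. move=> Hx; apply: (LC_sub_fin (y:=x)) => // p; by rewrite /LCopp oppr_eq0. Qed.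

Lemma LC_sub (x y : F) : LC x -> LC y -> LC (LCsub x y).
Proof.
move=> Hx Hy; apply: (LC_sub_fin (LC_add Hx (LC_opp Hy))) => p.
by rewrite /LCsub /LCadd /LCopp.
Qed.

Lemma LC_zero : LC (@LCzero R).
Proof. by move=> q; apply: sub_finite_set (finite_set0 _) => p /= [_]; rewrite /LCzero eqxx. Qed.

Lemma LC_dlt q : LC (dlt q).
Proof.
move=> r; apply: sub_finite_set (finite_set1 q) => p /= [_]; rewrite /dlt.
by case: (p =P q); rewrite ?eqxx.
Qed.

Lemma LC_sum (I : Type) (s : seq I) (f : I -> F) :
  (forall i, LC (f i)) -> LC (fun p => \sum_(i <- s) f i p).
Proof.
move=> Hf; elim: s => [|i s IH].
  by refine (LC_sub_fin LC_zero _) => p; rewrite big_nil eqxx.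
by refine (LC_sub_fin (LC_add (Hf i) IH) _) => p; rewrite big_cons.
Qed.

Lemma pos_ext (x y : F) : (forall p, x p = y p) -> LCpos y -> LCpos x.
Proof. by move=> H [q [h1 h2]]; exists q; split; [rewrite H|move=> p /h2; rewrite H]. Qed.

Lemma pos_add (x y : F) : LCpos x -> LCpos y -> LCpos (LCadd x y).
Proof.
move=> [q1 [h1 z1]] [q2 [h2 z2]]; rewrite /LCadd.
have [lt12|] := ltP q1 q2.
  exists q1; split; first by rewrite (z2 _ lt12) addr0.
  by move=> p pq; rewrite z1 // z2 ?addr0 //; apply: lt_trans lt12.
rewrite le_eqVlt => /orP [/eqP e|lt21].
  subst; exists q1; split; first exact: addr_gt0.
  by move=> p pq; rewrite z1 // z2 // addr0.
exists q2; split; first by rewrite (z1 _ lt21) add0r.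
by move=> p pq; rewrite z2 // z1 ?addr0 //; apply: lt_trans lt21.
Qed.

Lemma pos_zero : ~ LCpos (@LCzero R).
Proof. by move=> [q [h _]]; move: h; rewrite /LCzero ltxx. Qed.

Lemma pos_opp (x : F) : LCpos x -> LCpos (LCopp x) -> False.
Proof.
move=> h1 h2; apply: pos_zero; apply: pos_ext (pos_add h1 h2) => p.
by rewrite /LCadd /LCopp /LCzero subrr.
Qed.

Lemma pos_dlt q : LCpos (dlt q).
Proof.
exists q; split; first by rewrite /dlt eqxx ltr01.
by move=> p pq; rewrite /dlt (lt_eqF pq).
Qed.

Lemma seq_min (s : seq rat) x : x \in s -> exists2 r, r \in s & forall y, y \in s -> r <= y.
Proof.
elim: s x => [//|a s IH] x; rewrite inE => /orP [/eqP _|xs].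
  case: (pselect (exists y, y \in s)) => [[y ys]|ns].
    have [r rs rmin] := IH _ ys.
    have [ar|ra] := leP a r.
      exists a; first by rewrite inE eqxx.
      by move=> z; rewrite inE => /orP [/eqP ->//|/rmin]; apply: le_trans.
    exists r; first by rewrite inE rs orbT.
    by move=> z; rewrite inE => /orP [/eqP ->|/rmin//]; apply: ltW.
  exists a; first by rewrite inE eqxx.
  by move=> z; rewrite inE => /orP [/eqP ->//|zs]; exfalso; apply: ns; exists z.
have [r rs rmin] := IH _ xs.
have [ar|ra] := leP a r.
  exists a; first by rewrite inE eqxx.
  by move=> z; rewrite inE => /orP [/eqP ->//|/rmin]; apply: le_trans.
exists r; first by rewrite inE rs orbT.
by move=> z; rewrite inE => /orP [/eqP ->|/rmin//]; apply: ltW.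
Qed.

Lemma lead (x : F) p0 : LC x -> x p0 != 0 ->
  exists r, x r != 0 /\ forall p, p < r -> x p = 0.
Proof.
move=> Hx nz; have /finite_seqP [s Hs] := Hx (p0 + 1).
have p0s : p0 \in s.
  have : [set p | p < p0 + 1 /\ x p != 0] p0 by split => //; rewrite ltrDl ltr01.
  by rewrite Hs.
have [r rs rmin] := seq_min p0s.
have : [set` s] r by [].
rewrite -Hs => -[rlt xr]; exists r; split => // p pr.
apply/eqP; apply: contraT => xp.
have : [set` s] p by rewrite -Hs; split => //; apply: lt_trans rlt.
by move=> /rmin; rewrite leNgt pr.
Qed.

Lemma trich (x : F) : LC x -> x = @LCzero R \/ LCpos x \/ LCpos (LCopp x).
Proof.
move=> Hx; case: (pselect (exists p, x p != 0)) => [[p0 nz]|nz].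
  have [r [xr xz]] := lead Hx nz; right.
  have [xn|xp] := ltP (x r) 0.
    by right; exists r; split; [rewrite /LCopp oppr_gt0|move=> p /xz; rewrite /LCopp => ->; rewrite oppr0].
  by left; exists r; split => //; rewrite lt_neqAle eq_sym xr.
left; apply: funext => p; apply/eqP; apply: contraT => xp; case: nz; by exists p.
Qed.


Lemma dlt0 q p : p < q -> dlt q p = 0.
Proof. by move=> pq; rewrite /dlt lt_eqF. Qed.

Lemma lt_trans_ (x y z : F) : LClt x y -> LClt y z -> LClt x z.
Proof.
by move=> h1 h2; apply: pos_ext (pos_add h2 h1) => p; rewrite /LCsub /LCadd; ring.
Qed.

Lemma lt_irr (x : F) : ~ LClt x x.
Proof. by move=> h; apply: pos_zero; apply: pos_ext h => p; rewrite /LCsub /LCzero subrr. Qed.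

Lemma lt_asym (x y : F) : LClt x y -> LClt y x -> False.
Proof. by move=> h1 h2; apply: (lt_irr (lt_trans_ h1 h2)). Qed.

Lemma le_trans_ (x y z : F) : LCle x y -> LCle y z -> LCle x z.
Proof.
move=> [->|h1] [<-|h2]; [by left|by right|by right|].
by right; apply: lt_trans_ h1 h2.
Qed.

Lemma le_refl_ (x : F) : LCle x x.
Proof. by left. Qed.

Lemma lt_le_F (x y : F) : LClt x y -> LCle y x -> False.
Proof. by move=> h [e|h2]; [subst; apply: (lt_irr h)|apply: (lt_asym h h2)]. Qed.

Lemma total (x y : F) : LC x -> LC y -> x = y \/ LClt x y \/ LClt y x.
Proof.
move=> Hx Hy; have [e|[p|n]] := trich (LC_sub Hy Hx).
- left; apply: funext => p; have := congr1 (fun f => f p) e.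
  by rewrite /LCsub /LCzero => /eqP; rewrite subr_eq0 => /eqP.
- by right; left.
- by right; right; apply: pos_ext n => p; rewrite /LCsub /LCopp opprB.
Qed.

Lemma nlt_le (x y : F) : LC x -> LC y -> ~ LClt y x -> LCle x y.
Proof.
by move=> Hx Hy h; have [e|[l|l]] := total Hx Hy; [left|right|].
Qed.

Lemma le_antisym_ (x y : F) : LCle x y -> LCle y x -> x = y.
Proof. by move=> [//|h] h2; exfalso; apply: lt_le_F h h2. Qed.

Lemma le_slack (X Y e : F) : (forall p, Y p = X p + e p) ->
  (e = @LCzero R \/ LCpos e) -> LCle X Y.
Proof.
move=> H [e0|h].
  by left; apply: funext => p; rewrite H e0 /LCzero addr0.
by right; apply: pos_ext h => p; rewrite /LCsub H; ring.
Qed.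

Lemma le_add (a b c d : F) : LCle a b -> LCle c d -> LCle (LCadd a c) (LCadd b d).
Proof.
move=> [<-|h1] [<-|h2]; [by left| | |].
- by right; apply: pos_ext h2 => p; rewrite /LCsub /LCadd; ring.
- by right; apply: pos_ext h1 => p; rewrite /LCsub /LCadd; ring.
- by right; apply: pos_ext (pos_add h1 h2) => p; rewrite /LCsub /LCadd; ring.
Qed.

Lemma le_ext (a b a' b' : F) : (forall p, a p = a' p) -> (forall p, b p = b' p) ->
  LCle a' b' -> LCle a b.
Proof.
move=> Ha Hb; have -> : a = a' by apply: funext.
by have -> : b = b' by apply: funext.
Qed.

Definition close q (x y : F) := forall p, p < q -> x p = y p.

Lemma pos_close (f : F) : LCpos f -> exists q, forall g, close q g f -> LCpos g.
Proof.
move=> [r [h z]]; exists (r + 1) => g c; exists r; split.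
  by rewrite c // ltrDl ltr01.
move=> p pr; rewrite c ?z //; apply: lt_trans pr _; by rewrite ltrDl ltr01.
Qed.

Lemma close_mono q q' (x y : F) : q' <= q -> close q x y -> close q' x y.
Proof. by move=> h c p pq; apply: c; apply: lt_le_trans h. Qed.

Definition conv (s : nat -> F) (L : F) :=
  LC L /\ forall q, exists N, forall n, (N <= n)%N -> close q (s n) L.

Lemma conv_LCconv s L : conv s L -> LCconv s L.
Proof.
move=> [HL Hc]; split; first by rewrite inE.
move=> lo hi _ _ h1 h2.
have [q1 Q1] := pos_close h1; have [q2 Q2] := pos_close h2.
have [N HN] := Hc (Num.max q1 q2); exists N => n Nn; split.
  apply: Q1 => p pq; rewrite /LCsub HN //; apply: lt_le_trans pq _.
  by rewrite le_max lexx.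
apply: Q2 => p pq; rewrite /LCsub HN //; apply: lt_le_trans pq _.
by rewrite le_max lexx orbT.
Qed.

Lemma small_between q (e : F) : LCpos (LCadd e (dlt q)) -> LCpos (LCsub (dlt q) e) ->
  close q e (@LCzero R).
Proof.
move=> [r1 [h1 z1]] [r2 [h2 z2]].
have r1q : q <= r1.
  rewrite leNgt; apply/negP => r1q.
  move: h1; rewrite /LCadd dlt0 // addr0 => h1.
  have [r21|r12] := ltP r2 r1.
    have := z1 _ r21; rewrite /LCadd dlt0 ?addr0; last by apply: lt_trans r1q.
    move=> e0; move: h2; rewrite /LCsub e0 dlt0 ?subrr ?ltxx //; by apply: lt_trans r1q.
  move: r12; rewrite le_eqVlt => /orP [/eqP ee|r12].
    by move: h2; rewrite /LCsub -ee dlt0 // sub0r oppr_gt0 => h2; move: (lt_trans h1 h2); rewrite ltxx.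
  have := z2 _ r12; rewrite /LCsub dlt0 // sub0r => /eqP; rewrite oppr_eq0 => /eqP e0.
  by move: h1; rewrite e0 ltxx.
move=> p pq; have := z1 p (lt_le_trans pq r1q); rewrite /LCadd dlt0 // addr0 => ->.
by [].
Qed.

Lemma LCconv_conv s L : LCconv s L -> conv s L.
Proof.
move=> [HL Hc]; move: (HL); rewrite inE => HL'; split => // q.
have Hlo : LCsub L (dlt q) \in LC by rewrite inE; apply: LC_sub => //; apply: LC_dlt.
have Hhi : LCadd L (dlt q) \in LC by rewrite inE; apply: LC_add => //; apply: LC_dlt.
have l1 : LClt (LCsub L (dlt q)) L.
  by apply: pos_ext (pos_dlt q) => p; rewrite /LCsub; ring.
have l2 : LClt L (LCadd L (dlt q)).
  by apply: pos_ext (pos_dlt q) => p; rewrite /LCsub /LCadd; ring.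
have [N HN] := Hc _ _ Hlo Hhi l1 l2.
exists N => n Nn; have [a b] := HN _ Nn.
have a' : LCpos (LCadd (LCsub (s n) L) (dlt q)).
  by apply: pos_ext a => p; rewrite /LCadd /LCsub; ring.
have b' : LCpos (LCsub (dlt q) (LCsub (s n) L)).
  by apply: pos_ext b => p; rewrite /LCadd /LCsub; ring.
move=> p pq; have := small_between a' b' pq; rewrite /LCsub /LCzero => /eqP.
by rewrite subr_eq0 => /eqP.
Qed.


Lemma LC_ext (x y : F) : (forall p, x p = y p) -> LC y -> LC x.
Proof. by move=> H Hy; refine (LC_sub_fin Hy _) => p; rewrite H. Qed.

Lemma psumS (a : nat -> F) n p : LCpsum a n.+1 p = LCpsum a n p + a n p.
Proof. by rewrite /LCpsum big_ord_recr. Qed.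

Lemma psum0 (a : nat -> F) p : LCpsum a 0 p = 0.
Proof. by rewrite /LCpsum big_ord0. Qed.

Lemma psum_ext (a b : nat -> F) : (forall n p, a n p = b n p) ->
  forall n p, LCpsum a n p = LCpsum b n p.
Proof. by move=> H n p; rewrite /LCpsum; apply: eq_bigr => i _; rewrite H. Qed.

Lemma LC_psum (a : nat -> F) : (forall n, LC (a n)) -> forall n, LC (LCpsum a n).
Proof.
move=> Ha; elim=> [|n IH].
  by apply: LC_ext LC_zero => p; rewrite psum0.
by apply: (LC_ext (y := LCadd (LCpsum a n) (a n))); [move=> p; rewrite psumS|apply: LC_add].
Qed.

Definition consf (T : Type) (x : T) (a : nat -> T) n := if n is n'.+1 then a n' else x.

Lemma psum_cons (x : F) a n p : LCpsum (consf x a) n.+1 p = x p + LCpsum a n p.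
Proof. by rewrite /LCpsum big_ord_recl. Qed.

Lemma conv_cons (x : F) a L : LC x -> conv (LCpsum a) L ->
  conv (LCpsum (consf x a)) (LCadd x L).
Proof.
move=> Hx [HL Hc]; split; first exact: LC_add.
move=> q; have [N HN] := Hc q; exists N.+1 => [[//|n]] Nn p pq.
by rewrite psum_cons /LCadd HN.
Qed.

Definition il (T : Type) (a b : nat -> T) n := if odd n then b n./2 else a n./2.

Lemma psum_il (a b : nat -> F) n p :
  LCpsum (il a b) n p = LCpsum a (uphalf n) p + LCpsum b n./2 p.
Proof.
elim: n => [|n IH]; first by rewrite /= !psum0 addr0.
rewrite psumS IH /il /=; case: (boolP (odd n)) => on.
  by rewrite uphalf_half on add1n !psumS; ring.
have -> : uphalf n = n./2 by rewrite uphalf_half (negbTE on).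
by rewrite psumS; ring.
Qed.

Lemma conv_il (a b : nat -> F) La Lb : conv (LCpsum a) La -> conv (LCpsum b) Lb ->
  conv (LCpsum (il a b)) (LCadd La Lb).
Proof.
move=> [HLa Ha] [HLb Hb]; split; first exact: LC_add.
move=> q; have [Na HNa] := Ha q; have [Nb HNb] := Hb q.
exists (maxn Na Nb).*2 => n Nn p pq.
have h : (maxn Na Nb <= n./2)%N by rewrite -(doubleK (maxn Na Nb)); apply: half_leq.
have h2 : (n./2 <= uphalf n)%N by rewrite uphalf_half leq_addl.
rewrite psum_il /LCadd HNa ?HNb //.
  by apply: leq_trans h; rewrite leq_maxr.
by apply: leq_trans (leq_trans h h2); rewrite leq_maxl.
Qed.

Lemma psum_shift (a : nat -> F) K n p :
  LCpsum (fun m => a (K + m)%N) n p = LCpsum a (K + n) p - LCpsum a K p.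
Proof.
elim: n => [|n IH]; first by rewrite psum0 addn0 subrr.
by rewrite psumS IH addnS psumS; ring.
Qed.

Lemma conv_shift (a : nat -> F) L K : (forall n, LC (a n)) -> conv (LCpsum a) L ->
  conv (LCpsum (fun m => a (K + m)%N)) (LCsub L (LCpsum a K)).
Proof.
move=> Ha [HL Hc]; split; first by apply: LC_sub => //; apply: LC_psum.
move=> q; have [N HN] := Hc q; exists N => n Nn p pq.
rewrite psum_shift /LCsub HN //; apply: leq_trans Nn _; exact: leq_addl.
Qed.

Lemma conv_terms (a : nat -> F) L : conv (LCpsum a) L ->
  forall q, exists N, forall n, (N <= n)%N -> close q (a n) (@LCzero R).
Proof.
move=> [HL Hc] q; have [N HN] := Hc q; exists N => n Nn p pq.
have e : a n p = LCpsum a n.+1 p - LCpsum a n p by rewrite psumS; ring.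
by rewrite e !HN // ?subrr //; apply: leqW.
Qed.

Lemma conv_vanish s (L : F) q : conv s L -> (forall n p, p < q -> s n p = 0) ->
  close q L (@LCzero R).
Proof.
move=> [HL Hc] H p pq; have [N HN] := Hc q.
by rewrite -(HN N (leqnn N) p pq) H.
Qed.

Lemma psum_stab (a : nat -> F) p M n : (forall i, (M <= i)%N -> a i p = 0) ->
  (M <= n)%N -> LCpsum a n p = LCpsum a M p.
Proof.
move=> H /subnKC <-; elim: (n - M)%N => [|k IH]; first by rewrite addn0.
by rewrite addnS psumS IH H ?addr0 // leq_addr.
Qed.

Lemma complete (a : nat -> F) : (forall n, LC (a n)) ->
  (forall q, exists N, forall n, (N <= n)%N -> close q (a n) (@LCzero R)) ->
  exists L, conv (LCpsum a) L.
Proof.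
move=> Ha Hz; have [Nf HN] := choice Hz.
pose L : F := fun p => LCpsum a (Nf (p + 1)) p.
have key : forall q n p, (Nf q <= n)%N -> p < q -> LCpsum a n p = L p.
  move=> q n p nq pq; rewrite /L.
  have z : forall i : nat, (minn (Nf q) (Nf (p + 1)%R) <= i)%N -> a i p = 0.
    move=> i; rewrite geq_min => /orP [h|h].
      by have := HN q i h p pq.
    by have := HN (p + 1) i h p; rewrite ltrDl ltr01 => /(_ isT).
  rewrite (psum_stab z) ?geq_min ?nq // (psum_stab (n := Nf (p + 1)) z) //.
  by rewrite geq_min leqnn orbT.
exists L; split.
  move=> r; apply: sub_finite_set (LC_psum Ha (Nf r) r) => p /= [pr nz].
  by split => //; rewrite (key r (Nf r) p (leqnn _) pr).
by move=> q; exists (Nf q) => n nq p pq; apply: key nq pq.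
Qed.


Definition CI (a b : F) : lc_interval R := Itv a b true true.

Lemma mem_le (S : lc_interval R) x : itv_set S x ->
  LC x /\ LCle (ilo S) x /\ LCle x (ihi S).
Proof.
case: S => lo hi [] [] /= [Hx [h1 h2]]; rewrite inE in Hx; do ! split => //;
  by right.
Qed.

Lemma mem_CI (a b x : F) : LC x -> LCle a x -> LCle x b -> itv_set (CI a b) x.
Proof. by move=> Hx h1 h2; split; first by rewrite inE. Qed.

Lemma valid_CI (a b : F) : LC a -> LC b -> LClt a b -> itv_valid (CI a b).
Proof. by move=> Ha Hb h; split; [rewrite inE|split; [rewrite inE|]]. Qed.

Lemma valid_LC (S : lc_interval R) : itv_valid S -> LC (ilo S) /\ LC (ihi S) /\ LClt (ilo S) (ihi S).
Proof. by case=> h1 [h2 h3]; rewrite !inE in h1 h2. Qed.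

Lemma LC_len (S : lc_interval R) : itv_valid S -> LC (itv_len S).
Proof. by move=> /valid_LC [h1 [h2 _]]; apply: LC_sub. Qed.

Lemma lt_tiny q (a : F) : LClt a (LCadd a (dlt q)).
Proof. by apply: pos_ext (pos_dlt q) => p; rewrite /LCsub /LCadd; ring. Qed.

Lemma pos_dlt2 q : LCpos (LCadd (dlt q) (dlt q)).
Proof. exact: pos_add (pos_dlt q) (pos_dlt q). Qed.

Lemma le_lt (x y : F) : LClt x y -> LCle x y.
Proof. by right. Qed.

Lemma cut q (S : lc_interval R) (c : F) : itv_valid S -> LC c ->
  exists (L Rr : lc_interval R), itv_valid L /\ itv_valid Rr /\
   (forall x, itv_set S x -> LCle x c -> itv_set L x) /\
   (forall x, itv_set S x -> LCle c x -> itv_set Rr x) /\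
   LCle (LCadd (itv_len L) (itv_len Rr)) (LCadd (itv_len S) (LCadd (dlt q) (dlt q))).
Proof.
move=> HS Hc; have [Hlo [Hhi lh]] := valid_LC HS.
set lo := ilo S in Hlo lh *; set hi := ihi S in Hhi lh *.
have Ht := LC_dlt q.
have [clo|lc] : LCle c lo \/ LClt lo c.
  by have [e|[l|l]] := total Hc Hlo; [left; left|left; right|right].
- exists (CI lo (LCadd lo (dlt q))), (CI lo hi); refine (conj _ (conj _ (conj _ (conj _ _)))).
  + by apply: valid_CI => //; [apply: LC_add|apply: lt_tiny].
  + exact: (valid_CI Hlo Hhi lh).
  + move=> x xS xc; have [Hx [lx xh]] := mem_le xS.
    have e : x = lo by apply: le_antisym_ (le_trans_ xc clo) lx.
    apply: mem_CI; [exact: Hx|rewrite e; exact: le_refl_|rewrite e; right; exact: lt_tiny].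
  + by move=> x xS _; have [Hx [lx xh]] := mem_le xS; apply: mem_CI.
  + apply: (le_slack (e := dlt q)) => [p|]; last by right; apply: pos_dlt.
    by rewrite /LCadd /itv_len /LCsub /lo /hi /=; ring.
have [ch|hc] : LClt c hi \/ LCle hi c.
  by have [e|[l|l]] := total Hc Hhi; [right; left|left|right; right].
- exists (CI lo c), (CI c hi); refine (conj _ (conj _ (conj _ (conj _ _)))).
  + exact: (valid_CI Hlo Hc lc).
  + exact: (valid_CI Hc Hhi ch).
  + by move=> x xS xc; have [Hx [lx xh]] := mem_le xS; apply: mem_CI.
  + by move=> x xS cx; have [Hx [lx xh]] := mem_le xS; apply: mem_CI.
  + apply: (le_slack (e := LCadd (dlt q) (dlt q))) => [p|]; last by right; apply: pos_dlt2.
    by rewrite /LCadd /itv_len /LCsub /lo /hi /=; ring.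
- exists (CI lo hi), (CI hi (LCadd hi (dlt q))); refine (conj _ (conj _ (conj _ (conj _ _)))).
  + exact: (valid_CI Hlo Hhi lh).
  + by apply: valid_CI => //; [apply: LC_add|apply: lt_tiny].
  + by move=> x xS _; have [Hx [lx xh]] := mem_le xS; apply: mem_CI.
  + move=> x xS cx; have [Hx [lx xh]] := mem_le xS.
    have e : x = hi by apply: le_antisym_ xh (le_trans_ hc cx).
    apply: mem_CI; [exact: Hx|rewrite e; exact: le_refl_|rewrite e; right; exact: lt_tiny].
  + apply: (le_slack (e := dlt q)) => [p|]; last by right; apply: pos_dlt.
    by rewrite /LCadd /itv_len /LCsub /lo /hi /=; ring.
Qed.

Definition t4 q : F := LCadd (LCadd (dlt q) (dlt q)) (LCadd (dlt q) (dlt q)).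

Lemma split_itv q (S J : lc_interval R) : itv_valid S -> itv_valid J ->
  exists X Y1 Y2, itv_valid X /\ itv_valid Y1 /\ itv_valid Y2 /\
   (forall x, itv_set S x -> itv_set J x -> itv_set X x) /\
   (forall x, itv_set S x -> ~ itv_set J x -> itv_set Y1 x \/ itv_set Y2 x) /\
   LCle (LCadd (itv_len X) (LCadd (itv_len Y1) (itv_len Y2))) (LCadd (itv_len S) (t4 q)).
Proof.
move=> HS HJ; have [Hc [He ce]] := valid_LC HJ.
have [L1 [R1 [vL1 [vR1 [cL1 [cR1 h1]]]]]] := cut q HS Hc.
have [L2 [R2 [vL2 [vR2 [cL2 [cR2 h2]]]]]] := cut q vR1 He.
exists L2, L1, R2; refine (conj vL2 (conj vL1 (conj vR2 (conj _ (conj _ _))))).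
- move=> x xS xJ; have [Hx [cx xe]] := mem_le xJ.
  by apply: cL2 => //; apply: cR1.
- move=> x xS nJ; have [Hx _] := mem_le xS.
  have [e|[l|l]] := total Hx Hc.
  + by left; apply: cL1 => //; left.
  + by left; apply: cL1 => //; right.
  have [e|[l2|l2]] := total Hx He.
  + by right; apply: cR2; [apply: cR1 => //; right|left].
  + exfalso; apply: nJ; split; first by rewrite inE.
    by case: (iloc J); case: (ihic J); split => //; right.
  + by right; apply: cR2; [apply: cR1 => //; right|right].
- apply: (le_trans_ (y := LCadd (LCadd (itv_len R1) (LCadd (dlt q) (dlt q))) (itv_len L1))).
    apply: le_ext (le_add h2 (le_refl_ (itv_len L1))) => p; rewrite /LCadd; ring.
  apply: (le_trans_ (y := LCadd (LCadd (itv_len S) (LCadd (dlt q) (dlt q))) (LCadd (dlt q) (dlt q)))).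
    apply: le_ext (le_add h1 (le_refl_ (LCadd (dlt q) (dlt q)))) => p; rewrite /LCadd; ring.
  by left; apply: funext => p; rewrite /t4 /LCadd; ring.
Qed.


Definition sm q (E : F) := LC E /\ close q E (@LCzero R).

Lemma sm_add q (E1 E2 : F) : sm q E1 -> sm q E2 -> sm q (LCadd E1 E2).
Proof.
move=> [h1 c1] [h2 c2]; split; first exact: LC_add.
by move=> p pq; rewrite /LCadd c1 // c2 // /LCzero addr0.
Qed.

Lemma sm_dlt q : sm q (dlt q).
Proof. by split; [apply: LC_dlt|move=> p pq; rewrite dlt0]. Qed.

Lemma sm_zero q : sm q (@LCzero R).
Proof. by split; [apply: LC_zero|]. Qed.

Lemma sm_t4 q : sm q (t4 q).
Proof. by rewrite /t4; apply: sm_add; apply: sm_add; apply: sm_dlt. Qed.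

Definition sl (s : seq (lc_interval R)) : F := fun p => \sum_(I <- s) itv_len I p.

Lemma sl_nil p : sl [::] p = 0.
Proof. by rewrite /sl big_nil. Qed.
Lemma sl_cons I s p : sl (I :: s) p = itv_len I p + sl s p.
Proof. by rewrite /sl big_cons. Qed.
Lemma sl_cat s1 s2 p : sl (s1 ++ s2) p = sl s1 p + sl s2 p.
Proof. by rewrite /sl big_cat. Qed.

Lemma In_cat (T : Type) (x : T) (s1 s2 : seq T) :
  List.In x (s1 ++ s2) <-> List.In x s1 \/ List.In x s2.
Proof.
elim: s1 => [|a s1 IH] /=; first by split; [right|case].
rewrite IH; tauto.
Qed.

Lemma lsplit q (Js : seq (lc_interval R)) : (forall J, List.In J Js -> itv_valid J) ->
 forall S, itv_valid S -> exists As Bs E,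
  (forall I, List.In I As -> itv_valid I) /\ (forall I, List.In I Bs -> itv_valid I) /\
  (forall x, itv_set S x -> (exists J, List.In J Js /\ itv_set J x) ->
     exists I, List.In I As /\ itv_set I x) /\
  (forall x, itv_set S x -> (forall J, List.In J Js -> ~ itv_set J x) ->
     exists I, List.In I Bs /\ itv_set I x) /\
  sm q E /\ LCle (LCadd (sl As) (sl Bs)) (LCadd (itv_len S) E).
Proof.
elim: Js => [|J Js IH] HJs S HS.
  exists [::], [:: S], (@LCzero R); refine (conj _ (conj _ (conj _ (conj _ (conj _ _))))).
  - by [].
  - by move=> I [<-|].
  - by move=> x _ [J [[]]].
  - by move=> x xS _; exists S; split => //; left.
  - exact: sm_zero.
  - by left; apply: funext => p; rewrite /LCadd sl_nil sl_cons sl_nil /LCzero; ring.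
have HJ : itv_valid J by apply: HJs; left.
have HJs' : forall J', List.In J' Js -> itv_valid J' by move=> J' h; apply: HJs; right.
have [X [Y1 [Y2 [vX [vY1 [vY2 [cX [cY hl]]]]]]]] := split_itv q HS HJ.
have [As1 [Bs1 [E1 [vA1 [vB1 [cA1 [cB1 [s1 h1]]]]]]]] := IH HJs' _ vY1.
have [As2 [Bs2 [E2 [vA2 [vB2 [cA2 [cB2 [s2 h2]]]]]]]] := IH HJs' _ vY2.
exists (X :: (As1 ++ As2)), (Bs1 ++ Bs2), (LCadd (t4 q) (LCadd E1 E2)).
refine (conj _ (conj _ (conj _ (conj _ (conj _ _))))).
- move=> I [<-//|/In_cat [/vA1|/vA2]] //.
- by move=> I /In_cat [/vB1|/vB2].
- move=> x xS [J' [inJ' xJ']].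
  case: (pselect (itv_set J x)) => xJ; first by exists X; split; [left|apply: cX].
  case: inJ' => [eJ|inJ']; first by subst.
  have [y1|y2] := cY x xS xJ.
    have [I [iI xI]] := cA1 x y1 (ex_intro _ J' (conj inJ' xJ')).
    by exists I; split => //; right; apply/In_cat; left.
  have [I [iI xI]] := cA2 x y2 (ex_intro _ J' (conj inJ' xJ')).
  by exists I; split => //; right; apply/In_cat; right.
- move=> x xS nJ.
  have nJ0 : ~ itv_set J x by apply: nJ; left.
  have nJs : forall J', List.In J' Js -> ~ itv_set J' x by move=> J' h; apply: nJ; right.
  have [y1|y2] := cY x xS nJ0.
    have [I [iI xI]] := cB1 x y1 nJs.
    by exists I; split => //; apply/In_cat; left.
  have [I [iI xI]] := cB2 x y2 nJs.
  by exists I; split => //; apply/In_cat; right.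
- by apply: sm_add; [apply: sm_t4|apply: sm_add].
- apply: (le_trans_ (y := LCadd (itv_len X) (LCadd (LCadd (itv_len Y1) E1) (LCadd (itv_len Y2) E2)))).
    apply: le_ext (le_add (le_refl_ (itv_len X)) (le_add h1 h2)) => p.
      by rewrite /LCadd sl_cons !sl_cat; ring.
    by [].
  apply: (le_trans_ (y := LCadd (LCadd (itv_len S) (t4 q)) (LCadd E1 E2))).
    apply: le_ext (le_add hl (le_refl_ (LCadd E1 E2))) => p; rewrite /LCadd; ring.
  by left; apply: funext => p; rewrite /LCadd; ring.
Qed.


Lemma le_closure (x y : F) : LC x -> LC y ->
  (forall q, exists w, LCle x w /\ close q w y) -> LCle x y.
Proof.
move=> Hx Hy H; apply: nlt_le => // h.
have [q0 Q] := pos_close h; have [w [xw c]] := H q0.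
apply: (lt_le_F _ xw); apply: Q => p pq; by rewrite /LCsub c.
Qed.

Lemma conv_ext s s' (L L' : F) : conv s L -> (forall n p, s' n p = s n p) ->
  (forall p, L' p = L p) -> conv s' L'.
Proof.
move=> [HL Hc] Hs HLe; have e : L' = L by apply: funext.
subst; split => // q; have [N HN] := Hc q; exists N => n Nn p pq.
by rewrite Hs HN.
Qed.

Lemma il_even (T : Type) (a b : nat -> T) k : il a b k.*2 = a k.
Proof. by rewrite /il odd_double doubleK. Qed.

Lemma il_odd (T : Type) (a b : nat -> T) k : il a b k.*2.+1 = b k.
Proof. by rewrite /il /= odd_double /= uphalf_double. Qed.

Lemma il_valid (a b : nat -> lc_interval R) : (forall n, itv_valid (a n)) ->
  (forall n, itv_valid (b n)) -> forall n, itv_valid (il a b n).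
Proof. by move=> ha hb n; rewrite /il; case: odd. Qed.

Lemma conv_il_itv (a b : nat -> lc_interval R) La Lb :
  conv (LCpsum (fun n => itv_len (a n))) La -> conv (LCpsum (fun n => itv_len (b n))) Lb ->
  conv (LCpsum (fun n => itv_len (il a b n))) (LCadd La Lb).
Proof.
move=> h1 h2; apply: conv_ext (conv_il h1 h2) _ (fun p => erefl) => n p.
by apply: psum_ext => m r; rewrite /il; case: odd.
Qed.

Definition pre (s : seq (lc_interval R)) (a : nat -> lc_interval R) :=
  foldr (fun x b => consf x b) a s.

Lemma pre_valid s a : (forall I, List.In I s -> itv_valid I) ->
  (forall n, itv_valid (a n)) -> forall n, itv_valid (pre s a n).
Proof.
elim: s => [|x s IH] //= hs ha [|n] /=; first by apply: hs; left.
by apply: IH => // I h; apply: hs; right.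
Qed.

Lemma pre_in s a I : List.In I s -> exists n, pre s a n = I.
Proof.
elim: s => [|x s IH] //= [->|/IH [n e]]; first by exists 0%N.
by exists n.+1.
Qed.

Lemma pre_tail s a m : exists n, pre s a n = a m.
Proof.
elim: s => [|x s [n e]] /=; first by exists m.
by exists n.+1.
Qed.

Lemma conv_pre s a L : (forall I, List.In I s -> itv_valid I) ->
  conv (LCpsum (fun n => itv_len (a n))) L ->
  conv (LCpsum (fun n => itv_len (pre s a n))) (LCadd (sl s) L).
Proof.
elim: s => [|x s IH] hs h /=.
  by apply: conv_ext h (fun n p => erefl) _ => p; rewrite /LCadd sl_nil add0r.
have hx : itv_valid x by apply: hs; left.
have := conv_cons (LC_len hx) (IH (fun I h => hs I (or_intror h)) h).
move=> hc; apply: conv_ext hc _ _.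
  by move=> n p; apply: psum_ext => -[|m] r.
by move=> p; rewrite /LCadd sl_cons; ring.
Qed.

Fixpoint accum (T : Type) (f : nat -> seq T) n : seq T :=
  if n is n'.+1 then accum f n' ++ f n' else [::].

Lemma accum_in (T : Type) (f : nat -> seq T) n k x : (k < n)%N -> List.In x (f k) ->
  List.In x (accum f n).
Proof.
elim: n => [//|n IH]; rewrite ltnS leq_eqVlt => /orP [/eqP ->|kn] h /=; apply/In_cat.
  by right.
by left; apply: IH.
Qed.

Lemma accum_in_inv (T : Type) (f : nat -> seq T) n x : List.In x (accum f n) ->
  exists k, (k < n)%N /\ List.In x (f k).
Proof.
elim: n => [//|n IH] /= /In_cat [/IH [k [kn h]]|h].
  by exists k; split => //; apply: ltnW.
by exists n.
Qed.

Lemma sl_accum (f : nat -> seq (lc_interval R)) n p :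
  sl (accum f n) p = \sum_(k < n) sl (f k) p.
Proof.
elim: n => [|n IH] /=; first by rewrite sl_nil big_ord0.
by rewrite sl_cat IH big_ord_recr.
Qed.

Fixpoint jl (I : nat -> lc_interval R) n : seq (lc_interval R) :=
  if n is n'.+1 then I n' :: jl I n' else [::].

Lemma jl_in I n m : (m < n)%N -> List.In (I m) (jl I n).
Proof.
elim: n => [//|n IH]; rewrite ltnS leq_eqVlt => /orP [/eqP ->|mn] /=; first by left.
by right; apply: IH.
Qed.

Lemma jl_in_inv I n J : List.In J (jl I n) -> exists m, (m < n)%N /\ J = I m.
Proof.
elim: n => [//|n IH] /= [<-|/IH [m [mn e]]]; first by exists n.
by exists m; split => //; apply: ltnW.
Qed.


Lemma lsplit3 q (Js : seq (lc_interval R)) : (forall J, List.In J Js -> itv_valid J) ->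
 forall S, itv_valid S -> exists t : seq (lc_interval R) * seq (lc_interval R) * F,
  (forall I, List.In I t.1.1 -> itv_valid I) /\ (forall I, List.In I t.1.2 -> itv_valid I) /\
  (forall x, itv_set S x -> (exists J, List.In J Js /\ itv_set J x) ->
     exists I, List.In I t.1.1 /\ itv_set I x) /\
  (forall x, itv_set S x -> (forall J, List.In J Js -> ~ itv_set J x) ->
     exists I, List.In I t.1.2 /\ itv_set I x) /\
  sm q t.2 /\ LCle (LCadd (sl t.1.1) (sl t.1.2)) (LCadd (itv_len S) t.2).
Proof.
move=> HJs S HS; have [As [Bs [E H]]] := lsplit q HJs HS.
by exists (As, Bs, E).
Qed.

Lemma main_ge (I : nat -> lc_interval R) (A B : set F) (mA mB : F) S L :
  (forall n, itv_valid (I n)) ->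
  LCconv (fun n => itv_len (I n)) (@LCzero R) ->
  is_outer_measure A mA -> is_outer_measure B mB ->
  A `<=` \bigcup_n itv_set (I n) ->
  B `<=` ~` (\bigcup_n itv_set (I n)) ->
  is_cover (A `|` B) S L -> LCle (LCadd mA mB) L.
Proof.
move=> vI cI [mAi [mAl mAg]] [mBi [mBl mBg]] AI BI [vS [cov cS]].
have cS' := LCconv_conv cS.
have HL : LC L := cS'.1.
rewrite inE in mAi; rewrite inE in mBi.
apply: le_closure => //; first exact: LC_add.
move=> q.
have [_ cI'] := LCconv_conv cI.
have [N HN] := cI' q.
have [K HK] := cS'.2 q.
have HJs : forall J, List.In J (jl I N) -> itv_valid J by move=> J /jl_in_inv [m [_ ->]].
have [f Hf] := choice (fun k => lsplit3 q HJs (vS k)).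
pose As k := (f k).1.1; pose Bs k := (f k).1.2; pose Es k := (f k).2.
pose lenS := fun n => itv_len (S n).
have bnd : forall n, LCle (LCadd (sl (accum As n)) (sl (accum Bs n)))
    (LCadd (LCpsum lenS n) (fun p => \sum_(k < n) Es k p)).
  elim=> [|n IH].
    by left; apply: funext => p; rewrite /LCadd !sl_accum psum0 !big_ord0; ring.
  have [_ [_ [_ [_ [_ hb]]]]] := Hf n.
  apply: le_ext (le_add IH hb) => p.
    by rewrite /LCadd !sl_accum !big_ord_recr /= /As /Bs; ring.
  by rewrite /LCadd psumS big_ord_recr /= /lenS /Es; ring.
pose Ef : F := fun p => \sum_(k < K) Es k p.
have smEf : sm q Ef.
  split.
    by apply: LC_sum => k; have [_ [_ [_ [_ [[h _] _]]]]] := Hf k.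
  move=> p pq; rewrite /Ef /LCzero big1 // => k _.
  by have [_ [_ [_ [_ [[_ h] _]]]]] := Hf k; apply: h.
have LClen : forall n, LC (lenS n) by move=> n; apply: LC_len.
pose tS := LCsub L (LCpsum lenS K).
have smtS : sm q tS.
  split; first by apply: LC_sub => //; apply: LC_psum.
  by move=> p pq; rewrite /tS /LCsub (HK K (leqnn K) p pq) subrr.
have cSt := conv_shift K LClen cS'.
pose bI := fun n => itv_len (I (N + n)%N).
have [TI cTI] : exists TI, conv (LCpsum bI) TI.
  apply: complete; first by move=> n; apply: LC_len.
  move=> q'; have [N' HN'] := cI' q'; exists N' => n Nn.
  by apply: HN'; apply: leq_trans Nn (leq_addl _ _).
have smTI : sm q TI.
  split; first exact: cTI.1.
  apply: conv_vanish cTI _ => n p pq; rewrite /LCpsum big1 // => i _.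
  by rewrite /bI (HN (N + i)%N (leq_addr _ _) p pq).
pose CA := pre (accum As K) (il (fun n => S (K + n)%N) (fun n => I (N + n)%N)).
pose SA := LCadd (sl (accum As K)) (LCadd tS TI).
have vAs : forall I', List.In I' (accum As K) -> itv_valid I'.
  move=> I' h0; have [k [_ h]] := accum_in_inv h0; have [hv _] := Hf k; exact: hv h.
have vBs : forall I', List.In I' (accum Bs K) -> itv_valid I'.
  move=> I' h0; have [k [_ h]] := accum_in_inv h0; have [_ [hv _]] := Hf k; exact: hv h.
have coverA : is_cover A CA SA.
  split; first by apply: pre_valid => //; apply: il_valid.
  split.
    move=> x Ax; have [n _ xn] := AI x Ax.
    case: (leqP N n) => Nn.
      have [i e] := pre_tail (accum As K) (il (fun n => S (K + n)%N) (fun n => I (N + n)%N)) (n - N).*2.+1.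
      by exists i => //; rewrite /CA e il_odd subnKC.
    have [k _ xk] := cov x (or_introl Ax).
    case: (leqP K k) => Kk.
      have [i e] := pre_tail (accum As K) (il (fun n => S (K + n)%N) (fun n => I (N + n)%N)) (k - K).*2.
      by exists i => //; rewrite /CA e il_even subnKC.
    have [_ [_ [hc _]]] := Hf k.
    have [I' [iI xI]] := hc x xk (ex_intro _ (I n) (conj (jl_in I Nn) xn)).
    have [i e] := pre_in (il (fun n => S (K + n)%N) (fun n => I (N + n)%N)) (@accum_in _ As K k I' Kk iI).
    by exists i => //; rewrite /CA e.
  apply: conv_LCconv; apply: conv_pre => //.
  exact: (conv_il_itv cSt cTI).
have leA : LCle mA SA by apply: mAl; exists CA.
pose CB := pre (accum Bs K) (fun n => S (K + n)%N).
pose SB := LCadd (sl (accum Bs K)) tS.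
have coverB : is_cover B CB SB.
  split; first by apply: pre_valid.
  split.
    move=> x Bx; have [k _ xk] := cov x (or_intror Bx).
    case: (leqP K k) => Kk.
      have [i e] := pre_tail (accum Bs K) (fun n => S (K + n)%N) (k - K).
      by exists i => //; rewrite /CB e subnKC.
    have [_ [_ [_ [hc _]]]] := Hf k.
    have nJ : forall J, List.In J (jl I N) -> ~ itv_set J x.
      move=> J /jl_in_inv [m [_ ->]] xJ; apply: (BI x Bx); by exists m.
    have [I' [iI xI]] := hc x xk nJ.
    have [i e] := pre_in (fun n => S (K + n)%N) (@accum_in _ Bs K k I' Kk iI).
    by exists i => //; rewrite /CB e.
  by apply: conv_LCconv; apply: conv_pre.
have leB : LCle mB SB by apply: mBl; exists CB.
pose Et := LCadd Ef (LCadd tS TI).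
exists (LCadd L Et); split.
  apply: le_trans_ (le_add leA leB) _.
  apply: (le_trans_ (y := LCadd (LCadd (LCpsum lenS K) Ef) (LCadd tS (LCadd tS TI)))).
    apply: le_ext (le_add (bnd K) (le_refl_ (LCadd tS (LCadd tS TI)))) => p //.
    by rewrite /SA /SB /LCadd; ring.
  by left; apply: funext => p; rewrite /Et /tS /LCadd /LCsub; ring.
move=> p pq; rewrite /LCadd /Et /LCadd smEf.2 // smtS.2 // smTI.2 // /LCzero; ring.
Qed.


Lemma approx (X : set F) m q : is_outer_measure X m ->
  exists S L, is_cover X S L /\ close q L m.
Proof.
move=> [mi [ml mg]]; rewrite inE in mi.
have Hmt : LC (LCadd m (dlt q)) by apply: LC_add => //; apply: LC_dlt.
case: (pselect (exists L, cover_sums X L /\ ~ LCle (LCadd m (dlt q)) L)) => [[L [[S cS] nle]]|H].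
  have HL : LC L by have [_ [_ c]] := cS; exact: (LCconv_conv c).1.
  exists S, L; split => //.
  have mL : LCle m L := ml L (ex_intro _ S cS).
  have [e|[l|l]] := total HL Hmt.
  - by exfalso; apply: nle; left.
  - case: mL => [<-//|pm] p pq.
    have l' : LCpos (LCsub (dlt q) (LCsub L m)).
      by apply: pos_ext l => r; rewrite /LCsub /LCadd; ring.
    have := small_between (pos_add pm (pos_dlt q)) l' pq.
    by rewrite /LCsub /LCzero => /eqP; rewrite subr_eq0 => /eqP.
  - by exfalso; apply: nle; right.
have : LCle (LCadd m (dlt q)) m.
  apply: mg; first by rewrite inE.
  move=> L hL; case: (pselect (LCle (LCadd m (dlt q)) L)) => // nl.
  by exfalso; apply: H; exists L.
move=> [e|p].
  have := congr1 (fun f => f q) e; rewrite /LCadd /dlt eqxx => /eqP.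
  by rewrite -subr_eq0 addrAC subrr add0r oner_eq0.
exfalso; apply: (pos_opp (pos_dlt q)); apply: pos_ext p => r.
by rewrite /LCopp /LCsub /LCadd; ring.
Qed.

End Aux.

Unset Implicit Arguments.
Set Strict Implicit.

Theorem proposition3p4 (R : realType) (I : nat -> lc_interval R)
  (A B : set (LCf R)) (mA mB : LCf R) :
  (forall n, itv_valid (I n)) ->
  (forall n m, n <> m -> itv_set (I n) `&` itv_set (I m) = set0) ->
  LCconv (fun n => itv_len (I n)) (@LCzero R) ->
  A `<=` @LC R -> B `<=` @LC R ->
  is_outer_measure A mA -> is_outer_measure B mB ->
  A `<=` \bigcup_n itv_set (I n) ->
  B `<=` ~` (\bigcup_n itv_set (I n)) ->
  outer_measurable (A `|` B) /\ is_outer_measure (A `|` B) (LCadd mA mB).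
Proof.
move=> vI dI cI AL BL hA hB AI BI.
have [mAi _] := hA; have [mBi _] := hB.
rewrite inE in mAi; rewrite inE in mBi.
have HmAB : LC (LCadd mA mB) by apply: LC_add.
have key : is_outer_measure (A `|` B) (LCadd mA mB).
  split; first by rewrite inE.
  split.
    by move=> L [S cS]; apply: (main_ge vI cI hA hB AI BI cS).
  move=> m' m'i H; rewrite inE in m'i.
  apply: le_closure => // q.
  have [SA [LA [cA clA]]] := approx q hA.
  have [SB [LB [cB clB]]] := approx q hB.
  exists (LCadd LA LB); split.
    apply: H; exists (il SA SB); split.
      by apply: il_valid; [exact: cA.1|exact: cB.1].
    split.
      move=> x [Ax|Bx].
        have [k _ xk] := cA.2.1 x Ax; by exists k.*2 => //; rewrite il_even.
      have [k _ xk] := cB.2.1 x Bx; by exists k.*2.+1 => //; rewrite il_odd.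
    apply: conv_LCconv; apply: conv_il_itv.
      exact: (LCconv_conv cA.2.2).
    exact: (LCconv_conv cB.2.2).
  by move=> p pq; rewrite /LCadd clA // clB.
by split => //; exists (LCadd mA mB).
Qed.
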